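(* Consider simultaneous two-player weighted congestion games with affine costs and proportional cost functions, where the player weights $w_1,w_2\ge0$ (with $w_1+w_2>0$) are arbitrary. The price of anarchy (supremum over all weights and all instances, with respect to pure Nash equilibria) is approximately $2.0411$, both for general congestion games and for network routing games, and it is attained for $w_1/w_2 \approx 1.2704$ and for $w_2/w_1\approx 1.2704$.
   Context: A weighted two-player congestion game with affine costs consists of a finite set $R$ of resources, coefficients $\alpha_r,\beta_r \geq 0$ for each $r\in R$, two players $i=1,2$ with weights $w_i\ge 0$, and for each player $i$ a nonempty finite set $\mathcal{A}_i \subseteq 2^R$ of actions. For an action profile $A=(A_1,A_2)$ the load of $r$ is $x_r(A)=\sum_{j:\, r\in A_j} w_j$. With proportional costs, player $i$ pays $C_i(A)=w_i\sum_{r\in A_i}(\alpha_r+\beta_r x_r(A))$. The social cost is $C(A)=C_1(A)+C_2(A)$. In a network routing game, $R$ is the arc set of a directed graph, player $i$ has a source $s_i$ and sink $t_i$, and $\mathcal{A}_i$ is the set of arc sets of directed $s_i$–$t_i$ paths. A pure Nash equilibrium is a profile from which no player can lower her cost by unilaterally changing her action. The price of anarchy of an instance is the maximum over Nash equilibria $A$ of $C(A)/\min_{A'} C(A')$; the price of anarchy of a class is the supremum over all instances (with positive optimal social cost). *)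

(* Defs.v *)
From HB Require Import structures.
From mathcomp Require Import all_boot all_order all_algebra.
From mathcomp Require Import reals.
Set Implicit Arguments.
Unset Strict Implicit.
Unset Printing Implicit Defensive.
Import Order.TTheory GRing.Theory Num.Theory.
Local Open Scope ring_scope.

Record cgame (T : finType) (R : realType) := CGame {
  alpha : T -> R;
  beta  : T -> R;
  w1 : R;
  w2 : R;
  acts1 : {set {set T}};
  acts2 : {set {set T}} }.

Section Game.
Variables (T : finType) (R : realType) (g : cgame T R).

Definition wf_game : Prop :=
  (forall r, 0 <= alpha g r) /\ (forall r, 0 <= beta g r) /\
  0 <= w1 g /\ 0 <= w2 g /\ 0 < w1 g + w2 g /\
  acts1 g != set0 /\ acts2 g != set0.

Definition feasible (A : {set T} * {set T}) : bool :=
  (A.1 \in acts1 g) && (A.2 \in acts2 g).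

Definition load (A : {set T} * {set T}) (r : T) : R :=
  (if r \in A.1 then w1 g else 0) + (if r \in A.2 then w2 g else 0).

Definition cost1 (A : {set T} * {set T}) : R :=
  w1 g * \sum_(r in A.1) (alpha g r + beta g r * load A r).
Definition cost2 (A : {set T} * {set T}) : R :=
  w2 g * \sum_(r in A.2) (alpha g r + beta g r * load A r).

Definition social_cost (A : {set T} * {set T}) : R := cost1 A + cost2 A.

Definition is_NE (A : {set T} * {set T}) : Prop :=
  feasible A /\
  (forall B1, B1 \in acts1 g -> cost1 A <= cost1 (B1, A.2)) /\
  (forall B2, B2 \in acts2 g -> cost2 A <= cost2 (A.1, B2)).

Definition is_opt (o : R) : Prop :=
  (exists B, feasible B /\ social_cost B = o) /\
  (forall B, feasible B -> o <= social_cost B).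
End Game.

(* Directed (multi)graph with vertex set V and arc set T given by tail/head. *)
Fixpoint walk (T V : finType) (tl hd : T -> V) (s t : V) (es : seq T) : bool :=
  match es with
  | [::] => s == t
  | e :: es' => (tl e == s) && walk tl hd (hd e) t es'
  end.

Definition st_path (T V : finType) (tl hd : T -> V) (s t : V) (P : {set T}) : Prop :=
  exists es : seq T,
    walk tl hd s t es /\ uniq (s :: map hd es) /\ P = [set e | e \in es].

Definition is_network (T : finType) (R : realType) (g : cgame T R) : Prop :=
  exists (V : finType) (tl hd : T -> V) (s1 t1 s2 t2 : V),
    (forall P, P \in acts1 g <-> st_path tl hd s1 t1 P) /\
    (forall P, P \in acts2 g <-> st_path tl hd s2 t2 P).

Definition poa_ratios (R : realType) (network : bool) (wcond : R -> R -> Prop)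
    (x : R) : Prop :=
  exists (T : finType) (g : cgame T R) (A : {set T} * {set T}) (o : R),
    wf_game g /\ (network -> is_network g) /\ wcond (w1 g) (w2 g) /\
    is_NE g A /\ is_opt g o /\ 0 < o /\ x = social_cost g A / o.

Definition is_sup (R : realType) (S : R -> Prop) (v : R) : Prop :=
  (forall x, S x -> x <= v) /\
  (forall e, 0 < e -> exists x, S x /\ v - e < x).

Definition price_of_anarchy (R : realType) (network : bool)
    (wcond : R -> R -> Prop) (v : R) : Prop :=
  is_sup (poa_ratios network wcond) v.

(* Main.v *)
Require Import Defs.
From HB Require Import structures.
From mathcomp Require Import all_boot all_order all_algebra.
From mathcomp Require Import reals.
Import Order.TTheory GRing.Theory Num.Theory.
Local Open Scope ring_scope.
From mathcomp Require Import ring lra.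
Set Implicit Arguments. Unset Strict Implicit.

Section UB.
Variable R : realType.

Definition LL (a b : bool) (w1 w2 : R) := (if a then w1 else 0) + (if b then w2 else 0).

Definition Ef (V w1 w2 al be : R) (a1 a2 b1 b2 : bool) :=
  (w1 + w2) * (((if a1 then w1 * (al + be * LL a1 a2 w1 w2) else 0) +
                (if a2 then w2 * (al + be * LL a1 a2 w1 w2) else 0)) -
           V * ((if b1 then w1 * (al + be * LL b1 b2 w1 w2) else 0) +
                (if b2 then w2 * (al + be * LL b1 b2 w1 w2) else 0)))
  - (V * w1 * ((if a1 then w1 * (al + be * LL a1 a2 w1 w2) else 0) -
               (if b1 then w1 * (al + be * LL b1 a2 w1 w2) else 0))
   + (w1 + w2) * ((if a2 then w2 * (al + be * LL a1 a2 w1 w2) else 0) -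
               (if b2 then w2 * (al + be * LL a1 b2 w1 w2) else 0))).

Lemma Ef_lin V w1 w2 al be a1 a2 b1 b2 :
  Ef V w1 w2 al be a1 a2 b1 b2 = al * Ef V w1 w2 1 0 a1 a2 b1 b2 + be * Ef V w1 w2 0 1 a1 a2 b1 b2.
Proof. by case: a1; case: a2; case: b1; case: b2; rewrite /Ef /LL /=; ring. Qed.


Lemma mono_hints (u d e : R) : 0 <= u -> 0 <= d -> 0 <= e -> True.
Proof. by []. Qed.

Ltac hints u d e hu hd he :=
  have m1 := mulr_ge0 hu hd;
  have m2 := mulr_ge0 hu hu;
  have m3 := mulr_ge0 hd hd;
  have m4 := mulr_ge0 m2 hu; have m5 := mulr_ge0 m2 hd;
  have m6 := mulr_ge0 m3 hu; have m7 := mulr_ge0 m3 hd;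
  have n0 := mulr_ge0 hu he; have n1 := mulr_ge0 hd he;
  have n2 := mulr_ge0 m1 he; have n3 := mulr_ge0 m2 he; have n4 := mulr_ge0 m3 he;
  have n5 := mulr_ge0 m4 he; have n6 := mulr_ge0 m5 he; have n7 := mulr_ge0 m6 he;
  have n8 := mulr_ge0 m7 he.

Lemma Ef_all V w1 w2 al be a1 a2 b1 b2 :
  0 <= w2 -> w2 <= w1 -> 2 <= V -> 0 <= al -> 0 <= be ->
  w1^+3 + 2 * w1^+2 * w2 + 2 * w1 * w2^+2 + w2^+3 <= V * (w1^+3 + w1 * w2^+2 + w2^+3) ->
  Ef V w1 w2 al be a1 a2 b1 b2 <= 0.
Proof.
move=> h2 h21 hV hal hbe k.
move: k; rewrite Ef_lin.
have hd : 0 <= w1 - w2 by lra.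
have he : 0 <= V - 2 by lra.
have -> : w1 = w2 + (w1 - w2) by ring.
have -> : V = 2 + (V - 2) by ring.
move: (w1 - w2) hd (V - 2) he => d hd e he k.
hints w2 d e h2 hd he.
have Ha : Ef (2 + e) (w2 + d) w2 1 0 a1 a2 b1 b2 <= 0.
  by clear -k h2 hd he m1 m2 m3 m4 m5 m6 m7 n0 n1 n2 n3 n4 n5 n6 n7 n8; case: a1; case: a2; case: b1; case: b2; rewrite /Ef /LL /=; lra.
have Hb : Ef (2 + e) (w2 + d) w2 0 1 a1 a2 b1 b2 <= 0.
  by clear -k h2 hd he m1 m2 m3 m4 m5 m6 m7 n0 n1 n2 n3 n4 n5 n6 n7 n8; case: a1; case: a2; case: b1; case: b2; rewrite /Ef /LL /=; lra.
have := mulr_ge0_le0 hal Ha; have := mulr_ge0_le0 hbe Hb; lra.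
Qed.

Definition Eg (V w1 w2 al be : R) (a1 a2 b1 b2 : bool) :=
  (w1 + w2) * (((if a1 then w1 * (al + be * LL a1 a2 w1 w2) else 0) +
                (if a2 then w2 * (al + be * LL a1 a2 w1 w2) else 0)) -
           V * ((if b1 then w1 * (al + be * LL b1 b2 w1 w2) else 0) +
                (if b2 then w2 * (al + be * LL b1 b2 w1 w2) else 0)))
  - (V * w1 * ((if a1 then w1 * (al + be * LL a1 a2 w1 w2) else 0) -
               (if b1 then w1 * (al + be * LL b1 a2 w1 w2) else 0))
   + (w1 + w2) * ((if a2 then w2 * (al + be * LL a1 a2 w1 w2) else 0) -
               (if b2 then w2 * (al + be * LL a1 b2 w1 w2) else 0))).

End UB.
Arguments LL {R}. Arguments Ef {R}. Arguments Eg {R}.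
Section UB2.
Variable R : realType.

Definition Eg' (V w1 w2 al be : R) (a1 a2 b1 b2 : bool) :=
  (w1 + w2) * (((if a1 then w1 * (al + be * LL a1 a2 w1 w2) else 0) +
                (if a2 then w2 * (al + be * LL a1 a2 w1 w2) else 0)) -
           V * ((if b1 then w1 * (al + be * LL b1 b2 w1 w2) else 0) +
                (if b2 then w2 * (al + be * LL b1 b2 w1 w2) else 0)))
  - ((w1 + w2) * ((if a1 then w1 * (al + be * LL a1 a2 w1 w2) else 0) -
               (if b1 then w1 * (al + be * LL b1 a2 w1 w2) else 0))
   + V * w2 * ((if a2 then w2 * (al + be * LL a1 a2 w1 w2) else 0) -
               (if b2 then w2 * (al + be * LL a1 b2 w1 w2) else 0))).

Lemma Eg'_swap V w1 w2 al be a1 a2 b1 b2 :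
  Eg' V w1 w2 al be a1 a2 b1 b2 = Ef V w2 w1 al be a2 a1 b2 b1.
Proof. by case: a1; case: a2; case: b1; case: b2; rewrite /Eg' /Ef /LL /=; ring. Qed.

Definition keyP (V : R) := forall x y : R, 0 <= x -> 0 <= y ->
  x^+3 + 2 * x^+2 * y + 2 * x * y^+2 + y^+3 <= V * (x^+3 + x * y^+2 + y^+3).

Lemma sum_in (T : finType) (S : {set T}) (w : R) (F : T -> R) :
  w * \sum_(r in S) F r = \sum_r (if r \in S then w * F r else 0).
Proof. by rewrite mulr_sumr big_mkcond. Qed.

Lemma upper (T : finType) (g : cgame T R) (V : R) (A B : {set T} * {set T}) :
  wf_game g -> keyP V -> 2 <= V -> is_NE g A -> feasible g B ->
  social_cost g A <= V * social_cost g B.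
Proof.
move=> [ha [hb [h1 [h2 [h12 _]]]]] key hV [_ [NE1 NE2]] /andP[fB1 fB2].
have N1 := NE1 _ fB1; have N2 := NE2 _ fB2.
move: N1 N2; rewrite /social_cost /cost1 /cost2 /load /= !sum_in.
set s1A := \sum_r _. set s2A := \sum_r _. set s1D := \sum_r _.
set s2D := \sum_r _. set s1B := \sum_r _. set s2B := \sum_r _.
move=> N1 N2.
have hs : 0 < w1 g + w2 g := h12.
have fin : (w1 g + w2 g) * ((s1A + s1D) - V * (s1B + s2B)) <= 0.
  have [h21|h12'] := lerP (w2 g) (w1 g).
  - have E : \sum_r Ef V (w1 g) (w2 g) (alpha g r) (beta g r) (r \in A.1) (r \in A.2) (r \in B.1) (r \in B.2)
     = (w1 g + w2 g) * ((s1A + s1D) - V * (s1B + s2B)) - (V * w1 g * (s1A - s2A) + (w1 g + w2 g) * (s1D - s2D)).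
      by rewrite /Ef /LL !(sumrB, big_split, =^~mulr_sumr) /=.
    have L : \sum_r Ef V (w1 g) (w2 g) (alpha g r) (beta g r) (r \in A.1) (r \in A.2) (r \in B.1) (r \in B.2) <= 0.
      apply: sumr_le0 => r _; apply: Ef_all => //.
      by apply: key.
    have hVw : 0 <= V * w1 g by apply: mulr_ge0 => //; lra.
    have := mulr_ge0_le0 hVw (_ : s1A - s2A <= 0).
    have := mulr_ge0_le0 (ltW hs) (_ : s1D - s2D <= 0).
    move: L; rewrite E. move=> L P1 P2. have := P1 ltac:(lra). have := P2 ltac:(lra). lra.
  - have E : \sum_r Eg' V (w1 g) (w2 g) (alpha g r) (beta g r) (r \in A.1) (r \in A.2) (r \in B.1) (r \in B.2)
     = (w1 g + w2 g) * ((s1A + s1D) - V * (s1B + s2B)) - ((w1 g + w2 g) * (s1A - s2A) + V * w2 g * (s1D - s2D)).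
      by rewrite /Eg' /LL !(sumrB, big_split, =^~mulr_sumr) /=.
    have L : \sum_r Eg' V (w1 g) (w2 g) (alpha g r) (beta g r) (r \in A.1) (r \in A.2) (r \in B.1) (r \in B.2) <= 0.
      apply: sumr_le0 => r _; rewrite Eg'_swap; apply: Ef_all => //; first exact: ltW.
      by apply: key.
    have hVw : 0 <= V * w2 g by apply: mulr_ge0 => //; lra.
    have := mulr_ge0_le0 hVw (_ : s1D - s2D <= 0).
    have := mulr_ge0_le0 (ltW hs) (_ : s1A - s2A <= 0).
    move: L; rewrite E. move=> L P1 P2. have := P1 ltac:(lra). have := P2 ltac:(lra). lra.
move: fin; rewrite pmulr_rle0 //; lra.
Qed.
End UB2.
Section C.
Variable R : realType.
Definition qp (r : R) := 2 * r^+4 + 2 * r^+3 - 2 * r^+2 - 4 * r - 1.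

Lemma root_ex_gen (a b : R) : a <= b -> qp a <= 0 -> 0 <= qp b ->
  exists r : R, a <= r <= b /\ qp r = 0.
Proof.
move=> hab ha hb.
pose p : {poly R} := 2%:P * 'X^4 + 2%:P * 'X^3 - 2%:P * 'X^2 - 4%:P * 'X - 1.
have hp : forall x, p.[x] = qp x.
  move=> x; rewrite /p /qp !hornerE /=. ring.
have H := @poly_ivt R.
have h2 : p.[a] <= 0 <= p.[b] by rewrite !hp ha hb.
have [x hx rx] := H p _ _ hab h2.
exists x; split => //. by move: rx; rewrite /root hp => /eqP.
Qed.

Lemma root_ex : exists r : R, 127036%:R / 100000%:R <= r <= 127037%:R / 100000%:R /\ qp r = 0.
Proof.
apply: root_ex_gen; rewrite /qp; lra.
Qed.
End C.

Section K.
Variable R : realType.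
Definition Vof (r : R) := 1 + (2 * r^+2 + r) / (r^+3 + r + 1).

Lemma key_ok (r : R) : 0 < r -> qp r = 0 -> keyP (Vof r).
Proof.
move=> hr hq x y hx hy.
have hD : 0 < r^+3 + r + 1 by have := exprn_gt0 3 hr; lra.
have id : r^+2 * (r^+3 + r + 1) * (Vof r * (x^+3 + x * y^+2 + y^+3) -
      (x^+3 + 2 * x^+2 * y + 2 * x * y^+2 + y^+3))
   = (2 * r^+2 + r) * (x - r * y)^+2 * (r^+2 * x + y) + qp r * (r * x^+2 * y - r^+2 * x * y^+2).
  rewrite /Vof /qp. field. by apply: lt0r_neq0.
rewrite hq mul0r addr0 in id.
have h1 : 0 <= (2 * r^+2 + r) * (x - r * y)^+2 * (r^+2 * x + y).
  apply: mulr_ge0; first apply: mulr_ge0.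
  - have := exprn_gt0 2 hr; lra.
  - exact: sqr_ge0.
  - have := exprn_gt0 2 hr. nra.
have h2 : 0 < r^+2 * (r^+3 + r + 1) by apply: mulr_gt0 => //; apply: exprn_gt0.
rewrite -id in h1.
rewrite -subr_ge0. by rewrite pmulr_rge0 in h1.
Qed.
End K.
Section B.
Variable R : realType.
Lemma V_ge2 (r : R) : 0 < r -> qp r = 0 -> 2 <= Vof r.
Proof. move=> hr hq; have := key_ok hr hq ler01 ler01. rewrite !expr1n !mulr1. lra. Qed.

Lemma V_bounds (r : R) : 127036%:R / 100000%:R <= r <= 127037%:R / 100000%:R -> qp r = 0 ->
  `|Vof r - 20411%:R / 10000%:R| < 1 / 10000%:R.
Proof.
move=> /andP[ha hb] hq.
have hr : 0 < r by lra.
have k := key_ok hr hq (x := 127%:R) (y := 100%:R) (ler0n _ _) (ler0n _ _).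
rewrite ltr_norml; apply/andP; split.
- lra.
- have hD : 0 < r^+3 + r + 1 by have := exprn_gt0 3 hr; lra.
  suff : (2 * r^+2 + r) / (r^+3 + r + 1) < 104120%:R / 100000%:R by rewrite /Vof; lra.
  rewrite ltr_pdivrMr //.
  have h1 : 0 <= r - 127036%:R / 100000%:R by lra.
  have h2 : 0 <= 127037%:R / 100000%:R - r by lra.
  nra.
Qed.
End B.
Inductive arc := R1 | R2 | R3 | E1 | E3 | E6.
Definition arc2n (a : arc) : nat :=
  match a with R1 => 0 | R2 => 1 | R3 => 2 | E1 => 3 | E3 => 4 | E6 => 5 end%N.
Definition n2arc (n : nat) : arc :=
  match n with 0 => R1 | 1 => R2 | 2 => R3 | 3 => E1 | 4 => E3 | _ => E6 end%N.
Lemma arcK : cancel arc2n n2arc. Proof. by case. Qed.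
HB.instance Definition _ := Countable.copy arc (can_type arcK).
Definition arc_enum := [:: R1; R2; R3; E1; E3; E6].
Lemma arc_enumP : Finite.axiom arc_enum. Proof. by case. Qed.
HB.instance Definition _ := isFinite.Build arc arc_enumP.

Inductive vtx := S1 | S2 | Va | Vc | Tt.
Definition vtx2n (a : vtx) : nat :=
  match a with S1 => 0 | S2 => 1 | Va => 2 | Vc => 3 | Tt => 4 end%N.
Definition n2vtx (n : nat) : vtx :=
  match n with 0 => S1 | 1 => S2 | 2 => Va | 3 => Vc | _ => Tt end%N.
Lemma vtxK : cancel vtx2n n2vtx. Proof. by case. Qed.
HB.instance Definition _ := Countable.copy vtx (can_type vtxK).
Definition vtx_enum := [:: S1; S2; Va; Vc; Tt].
Lemma vtx_enumP : Finite.axiom vtx_enum. Proof. by case. Qed.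
HB.instance Definition _ := isFinite.Build vtx vtx_enumP.

Definition tl (e : arc) : vtx :=
  match e with R1 => S2 | R2 => Va | R3 => Vc | E1 => S1 | E3 => S1 | E6 => S2 end.
Definition hd (e : arc) : vtx :=
  match e with R1 => Va | R2 => Tt | R3 => Tt | E1 => Va | E3 => Vc | E6 => Vc end.

Definition PA1 : {set arc} := [set E3; R3].
Definition PB1 : {set arc} := [set E1; R2].
Definition PA2 : {set arc} := [set R1; R2].
Definition PB2 : {set arc} := [set E6; R3].

Lemma paths1 P : P \in [set PA1; PB1] <-> st_path tl hd S1 Tt P.
Proof.
split.
- case/set2P => ->.
  + exists [:: E3; R3]; split; first by []. split; first by [].
    by apply/setP => e; rewrite !inE; case: e.
  + exists [:: E1; R2]; split; first by []. split; first by [].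
    by apply/setP => e; rewrite !inE; case: e.
- move=> [es [hw [_ ->]]]; move: hw.
  case: es => [|[] [|[] [|[] es]]] //= _.
  + apply/set2P; right; apply/setP => e; rewrite !inE; by case: e.
  + apply/set2P; left; apply/setP => e; rewrite !inE; by case: e.
Qed.

Lemma paths2 P : P \in [set PA2; PB2] <-> st_path tl hd S2 Tt P.
Proof.
split.
- case/set2P => ->.
  + exists [:: R1; R2]; split; first by []. split; first by [].
    by apply/setP => e; rewrite !inE; case: e.
  + exists [:: E6; R3]; split; first by []. split; first by [].
    by apply/setP => e; rewrite !inE; case: e.
- move=> [es [hw [_ ->]]]; move: hw.
  case: es => [|[] [|[] [|[] es]]] //= _.
  + apply/set2P; left; apply/setP => e; rewrite !inE; by case: e.
  + apply/set2P; right; apply/setP => e; rewrite !inE; by case: e.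
Qed.

Section Inst.
Variable R : realType.

Definition alp (r : R) (e : arc) : R := match e with R1 => r^+2 + r + 1 | _ => 0 end.
Definition bet (r : R) (e : arc) : R := match e with R2 => r | R3 => r + 1 | _ => 0 end.

Definition ginst (sw : bool) (r : R) : cgame arc R :=
  CGame (alp r) (bet r) (if sw then 1 else r) (if sw then r else 1)
    (if sw then [set PA2; PB2] else [set PA1; PB1])
    (if sw then [set PA1; PB1] else [set PA2; PB2]).

Lemma big2 (F : arc -> R) a b : a != b -> \sum_(e in [set a; b]) F e = F a + F b.
Proof.
move=> hab; rewrite big_setU1 /=; first by rewrite big_set1.
by rewrite inE.
Qed.

Definition NEi (sw : bool) := if sw then (PA2, PA1) else (PA1, PA2).

Ltac simp := rewrite /social_cost /cost1 /cost2 /load /= ?big2 // ?inE /=.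

Lemma inst_ok (sw : bool) (r : R) : 0 < r ->
  wf_game (ginst sw r) /\ is_NE (ginst sw r) (NEi sw) /\ is_opt (ginst sw r) (r^+3 + r + 1) /\
  social_cost (ginst sw r) (NEi sw) = (r^+3 + r + 1) * (1 + (2 * r^+2 + r) / (r^+3 + r + 1)).
Proof.
move=> hr.
have hD : 0 < r^+3 + r + 1 by have := exprn_gt0 3 hr; lra.
have ne1 : [set PA1; PB1] != set0 by apply/set0Pn; exists PA1; rewrite !inE eqxx.
have ne2 : [set PA2; PB2] != set0 by apply/set0Pn; exists PA2; rewrite !inE eqxx.
split; [|split; [|split]].
- rewrite /wf_game; split; first by case => /=; nra.
  split; first by case => /=; lra.
  by case: sw => /=; do !split => //; lra.
- case: sw; (split; [by rewrite /feasible /= !inE !eqxx ?orbT|split]);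
    move=> B /set2P [] ->; simp; nra.
- rewrite /is_opt; split.
  + exists (if sw then (PB2, PB1) else (PB1, PB2)); case: sw; split;
    (try by rewrite /feasible /= !inE !eqxx ?orbT); simp; ring.
  + move=> [B1 B2] /andP [] /=.
    case: sw => /= /set2P [] -> /set2P [] ->; simp; nra.
- rewrite mulrDr mulr1 mulrCA divff ?mulr1; last by apply: lt0r_neq0.
  case: sw; simp; ring.
Qed.
End Inst.

Section Final.
Variable R : realType.

Lemma poa_of net (wc : R -> R -> Prop) (V : R) :
  keyP V -> 2 <= V -> poa_ratios net wc V -> price_of_anarchy net wc V.
Proof.
move=> k h2 hV; split.
- move=> x [T [g [A [o [wf [_ [_ [ne [[[B [fB <-]] _] [ho ->]]]]]]]]]].
  rewrite ler_pdivrMr //. exact: upper.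
- move=> e he; exists V; split => //; lra.
Qed.

Lemma inst_ratio (r : R) sw net (wc : R -> R -> Prop) : 0 < r ->
  wc (if sw then 1 else r) (if sw then r else 1) -> poa_ratios net wc (Vof r).
Proof.
move=> hr hwc.
have [wf [ne [opt sc]]] := inst_ok sw hr.
have hD : 0 < r^+3 + r + 1 by have := exprn_gt0 3 hr; lra.
exists arc, (ginst sw r), (NEi sw), (r^+3 + r + 1).
split => //; split.
  move=> _; case: sw {wf ne opt sc hwc}.
  - exists vtx, tl, hd, S2, Tt, S1, Tt; split => P /=; [exact: paths2 | exact: paths1].
  - exists vtx, tl, hd, S1, Tt, S2, Tt; split => P /=; [exact: paths1 | exact: paths2].
split => //; split => //; split => //; split => //.
by rewrite sc /Vof; field; apply: lt0r_neq0.
Qed.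
End Final.

Theorem corollary2 (R : realType) :
  exists v : R,
    `|v - 20411%:R / 10000%:R| < 1 / 10000%:R /\
    price_of_anarchy false (fun _ _ => True) v /\
    price_of_anarchy true (fun _ _ => True) v /\
    exists rho : R,
      `|rho - 12704%:R / 10000%:R| < 1 / 10000%:R /\
      price_of_anarchy false (fun a b => a = rho * b) v /\
      price_of_anarchy true  (fun a b => a = rho * b) v /\
      price_of_anarchy false (fun a b => b = rho * a) v /\
      price_of_anarchy true  (fun a b => b = rho * a) v.
Proof.
have [r [hab hq]] := root_ex R.
have hr : 0 < r by case/andP: hab => ? ?; lra.
have k := key_ok hr hq; have h2 := V_ge2 hr hq.
exists (Vof r); split; first exact: V_bounds.
split; first by apply: poa_of => //; by apply: (inst_ratio (sw := false)).
split; first by apply: poa_of => //; by apply: (inst_ratio (sw := false)).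
exists r; split.
  by rewrite ltr_norml; case/andP: hab => ? ?; apply/andP; split; lra.
split; first by apply: poa_of => //; apply: (inst_ratio (sw := false)) => //=; rewrite mulr1.
split; first by apply: poa_of => //; apply: (inst_ratio (sw := false)) => //=; rewrite mulr1.
split; first by apply: poa_of => //; apply: (inst_ratio (sw := true)) => //=; rewrite mulr1.
by apply: poa_of => //; apply: (inst_ratio (sw := true)) => //=; rewrite mulr1.
Qed.
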